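(* Let $M$ be a manifold. Then $\mathsf{L}(M,\mathbb{R})$ holds.
   Context: All spaces are Hausdorff and maps continuous. A manifold is a connected Hausdorff space locally homeomorphic to $\mathbb{R}^n$. For a non-Lindelöf space $X$ and a space $Y$, $\mathsf{L}(X,Y)$ means: for every continuous $f:X\to Y$ there is a Lindelöf $Z\subset X$ with $f(Z)=f(X)$. (For Lindelöf $X$ the property is regarded as trivially true.) *)

(* Defs.v *)
From HB Require Import structures.
From mathcomp Require Import all_boot all_order all_algebra.
From mathcomp Require Import all_classical all_reals all_analysis.
Set Implicit Arguments. Unset Strict Implicit. Unset Printing Implicit Defensive.
Import Order.TTheory GRing.Theory Num.Theory.
Import numFieldNormedType.Exports.
Local Open Scope classical_set_scope.
Local Open Scope ring_scope.

(* Z is a Lindelöf subspace of T: every cover of Z by open subsets of T has a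
   countable subcover (equivalent to Z being Lindelöf in the subspace topology). *)
Definition lindelof_subset (T : topologicalType) (Z : set T) : Prop :=
  forall (I : Type) (U : I -> set T),
    (forall i, open (U i)) -> Z `<=` \bigcup_i U i ->
    exists J : set I, countable J /\ Z `<=` \bigcup_(i in J) U i.

Definition locally_euclidean (R : realType) (M : topologicalType) (n : nat) : Prop :=
  forall x : M, exists U : set M, open U /\ U x /\
    exists (f : M -> 'rV[R]_n) (g : 'rV[R]_n -> M),
      {within U, continuous f} /\ continuous g /\
      (forall y, U y -> g (f y) = y) /\
      (forall v, U (g v) /\ f (g v) = v).

Definition manifold (R : realType) (M : topologicalType) : Prop :=
  hausdorff_space M /\ connected [set: M] /\ exists n : nat, locally_euclidean R M n.

Definition prop_L (X Y : topologicalType) : Prop :=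
  forall f : X -> Y, continuous f ->
    exists Z : set X, lindelof_subset Z /\ f @` Z = f @` [set: X].

(* Main.v *)
Require Import Defs.
From mathcomp Require Import all_boot all_order all_algebra.
From mathcomp Require Import all_classical all_reals all_analysis.
From mathcomp Require Import finmap.
Import Order.TTheory GRing.Theory Num.Theory.
Import numFieldNormedType.Exports.
Local Open Scope classical_set_scope.
Local Open Scope ring_scope.

Lemma lind_image (T U : topologicalType) (h : T -> U) (A : set T) :
  continuous h -> lindelof_subset A -> lindelof_subset (h @` A).
Proof.
move=> hc HA I V oV cov.
have [J [cJ HJ]] := HA I (fun i => h @^-1` V i)
  (fun i => open_comp (fun x _ => hc x) (oV i)) (fun x Ax => cov _ (ex_intro2 _ _ x Ax erefl)).
exists J; split => // _ [x Ax <-].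
by have [i Ji Vi] := HJ x Ax; exists i.
Qed.

Lemma lind_bigcup (T : topologicalType) (K : Type) (D : set K) (Z : K -> set T) :
  countable D -> (forall k, D k -> lindelof_subset (Z k)) ->
  lindelof_subset (\bigcup_(k in D) Z k).
Proof.
move=> cD HZ I U oU cov.
have H : forall k, exists J : set I, D k -> countable J /\ Z k `<=` \bigcup_(i in J) U i.
  move=> k; case: (pselect (D k)) => Dk; last by exists set0.
  have [J HJ] := HZ k Dk I U oU (fun x Zx => cov x (ex_intro2 _ _ k Dk Zx)).
  by exists J.
have [Jf HJf] := choice H.
exists (\bigcup_(k in D) Jf k); split.
  by apply: bigcup_countable => // k Dk; case: (HJf k Dk).
move=> x [k Dk Zx]; have [_ /(_ x Zx) [i Ji Ui]] := HJf k Dk.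
by exists i => //; exists k.
Qed.

Lemma lind_setU (T : topologicalType) (A B : set T) :
  lindelof_subset A -> lindelof_subset B -> lindelof_subset (A `|` B).
Proof.
move=> HA HB.
have -> : A `|` B = \bigcup_(b in [set: bool]) (if b then A else B).
  apply/seteqP; split => [x [Ax|Bx]|x [[] _ ?]]; [by exists true|by exists false|by left|by right].
by apply: lind_bigcup => [|[] _]; first exact: countableP.
Qed.

Lemma lind_set1 (T : topologicalType) (x : T) : lindelof_subset [set x].
Proof.
move=> I U oU cov; have [i _ Ui] := cov x erefl.
exists [set i]; split; first exact: countable1.
by move=> _ ->; exists i.
Qed.

Lemma lind_compact (T : ptopologicalType) (A : set T) : compact A -> lindelof_subset A.
Proof.
rewrite compact_cover => cA I U oU cov.
case: (pselect (exists i : I, True)) => [[i0 _]|nI]; last first.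
  exists set0; split; first exact: countable0.
  by move=> x /cov [i]; exfalso; apply: nI; exists i.
pose sel (V : set T) : I :=
  match pselect (exists i, U i = V) with
  | left p => projT1 (cid p) | right _ => i0 end.
have selP : forall i, U (sel (U i)) = U i.
  move=> i; rewrite /sel; case: pselect => [p|]; last by case; exists i.
  by case: (cid p).
have oR : forall V, range U V -> open (id V) by move=> V [i _ <-]; exact: oU.
have cR : A `<=` cover (range U) id.
  by move=> x /cov [i _ Ui]; exists (U i) => //; exists i.
have [D' sD cD'] := cA _ (range U) id oR cR.
exists (sel @` [set` D']); split.
  by apply: finite_set_countable; apply: finite_image; exact: finite_fset.
move=> x /cD' [V D'V Vx].
move: (sD V D'V) => /set_mem [i _ Ui]; subst V.
by exists (sel (U i)); [exists (U i)|rewrite selP].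
Qed.
Definition btw {R : realType} (a b v : R) := (a <= v <= b) \/ (b <= v <= a).

Lemma chart_seg (R : realType) (M : topologicalType) (n : nat) (f : M -> R)
  (U : set M) (fc : M -> 'rV[R]_n) (g : 'rV[R]_n -> M) :
  continuous f -> continuous g -> (forall y, U y -> g (fc y) = y) ->
  forall x y, U x -> U y ->
  exists K, lindelof_subset K /\ forall v, btw (f x) (f y) v -> exists2 z, K z & f z = v.
Proof.
move=> fC gC gfc x y Ux Uy.
pose a := fc x; pose b := fc y.
pose p := fun t : R => a + t *: (b - a).
have pC : continuous p.
  move=> t; have -> : p = (cst a) + (fun t => t *: (b - a)) by [].
  apply: continuousD; first exact: cst_continuous.
  by apply: continuousZl.
pose h := g \o p.
have hC : continuous h by move=> t; apply: continuous_comp; [exact: pC|exact: gC].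
exists (h @` `[0, 1]); split.
  by apply: lind_image => //; apply: lind_compact; exact: segment_compact.
move=> v bv.
have h0 : f (h 0) = f x by rewrite /h /p /= scale0r addr0 gfc.
have h1 : f (h 1) = f y by rewrite /h /p /= scale1r addrC subrK gfc.
have [c c01 fc_v] : exists2 c, c \in `[(0:R), 1] & (f \o h) c = v.
  apply: IVT => //.
    by apply: continuous_subspaceT => t; apply: continuous_comp; [exact: hC|exact: fC].
  rewrite /= h0 h1; case: bv => /andP[l1 l2]; apply/andP; split.
  - by rewrite ge_min l1.
  - by rewrite le_max l2 orbT.
  - by rewrite ge_min l1 orbT.
  - by rewrite le_max l2.
by exists (h c) => //; exists c => //; rewrite inE in c01.
Qed.
Lemma btw_split (R : realType) (a b c v : R) : btw a c v -> btw a b v \/ btw b c v.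
Proof.
rewrite /btw => -[/andP[h1 h2]|/andP[h1 h2]]; case: (lerP v b) => hb.
- by left; left; apply/andP.
- by right; left; apply/andP; split => //; apply: ltW.
- by right; right; apply/andP.
- by left; right; apply/andP; split => //; apply: ltW.
Qed.

Theorem theorem5p1 (R : realType) (M : topologicalType) :
  manifold R M -> prop_L M R.
Proof.
move=> [hM [cM [n LE]]] f fC.
case: (pselect (exists x : M, True)) => [[x0 _]|nM]; last first.
  exists set0; split.
    by move=> I U oU cv; exists set0; split; [exact: countable0|].
  by apply/seteqP; split => y [x Hx _] //; exfalso; apply: nM; exists x.
pose good x := exists Z, lindelof_subset Z /\
  forall v, btw (f x0) (f x) v -> exists2 z, Z z & f z = v.
have trans : forall x y (U : set M) (fc : M -> 'rV[R]_n) (g : 'rV[R]_n -> M),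
    U x -> U y -> continuous g -> (forall z, U z -> g (fc z) = z) -> good x -> good y.
  move=> x y U fc g Ux Uy gC gfc [Z [lZ HZ]].
  have [K [lK HK]] := @chart_seg R M n f U fc g fC gC gfc x y Ux Uy.
  exists (Z `|` K); split; first exact: lind_setU.
  move=> v /(@btw_split R _ (f x)) [/HZ [z Zz <-]|/HK [z Kz <-]]; exists z => //; [by left|by right].
have gx0 : good x0.
  exists [set x0]; split; first exact: lind_set1.
  move=> v bv; exists x0 => //; apply/eqP; rewrite eq_le.
  by case: bv => /andP[h1 h2]; rewrite ?h1 ?h2.
have Sall : good = [set: M].
  apply: cM; first by exists x0.
    exists good; last by rewrite setTI.
    rewrite openE => x gx.
    have [U [oU [Ux [fc [g [_ [gC [gfc _]]]]]]]] := LE x.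
    apply: (filterS _ (@open_nbhs_nbhs _ x U _)); last by split.
    by move=> y Uy; apply: (trans x y U fc g).
  exists good; last by rewrite setTI.
  rewrite -[good]setCK; apply: open_closedC.
  rewrite openE => x ngx.
  have [U [oU [Ux [fc [g [_ [gC [gfc _]]]]]]]] := LE x.
  apply: (filterS _ (@open_nbhs_nbhs _ x U _)); last by split.
  by move=> y Uy gy; apply: ngx; apply: (trans y x U fc g).
have [Wf HW] : {Wf : M -> set M & forall x, lindelof_subset (Wf x) /\
    forall v, btw (f x0) (f x) v -> exists2 z, Wf x z & f z = v}.
  have Hg : forall x, good x by move=> x; rewrite Sall.
  exact: (choice Hg).
pose pt (i : bool * option rat) : M :=
  match i with
  | (true, Some q) => xget x0 [set x | ratr q <= f x]
  | (false, Some q) => xget x0 [set x | f x <= ratr q]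
  | (true, None) => xget x0 [set x | forall z, f z <= f x]
  | (false, None) => xget x0 [set x | forall z, f x <= f z]
  end.
exists (\bigcup_(i in [set: bool * option rat]) Wf (pt i)); split.
  by apply: lind_bigcup => [|i _]; [exact: countableP|case: (HW (pt i))].
apply/seteqP; split => [_ [x _ <-]|_ [x1 _ <-]]; first by exists x.
have fin : forall i, btw (f x0) (f (pt i)) (f x1) ->
    (f @` \bigcup_(i in [set: bool * option rat]) Wf (pt i)) (f x1).
  move=> i /(proj2 (HW (pt i))) [z Wz fz]; exists z => //; by exists i.
case: (lerP (f x0) (f x1)) => h01.
  case: (pselect (forall z, f z <= f x1)) => [mx|nmx].
    apply: (fin (true, None)).
    have : forall z, f z <= f (pt (true, None)).
      exact: (@xgetPex M x0 [set x | forall z, f z <= f x] (ex_intro _ x1 mx)).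
    by move=> /(_ x1) h; left; rewrite h01 h.
  have [z] : exists z, ~ (f z <= f x1) by apply/existsNP.
  move/negP; rewrite -ltNge => lz.
  have [q] := rat_in_itvoo lz; rewrite in_itv /= => /andP[q1 q2].
  apply: (fin (true, Some q)).
  have : ratr q <= f (pt (true, Some q)).
    exact: (@xgetPex M x0 [set x | ratr q <= f x] (ex_intro _ z (ltW q2))).
  by move=> h; left; rewrite h01 (le_trans (ltW q1) h).
case: (pselect (forall z, f x1 <= f z)) => [mx|nmx].
  apply: (fin (false, None)).
  have : forall z, f (pt (false, None)) <= f z.
    exact: (@xgetPex M x0 [set x | forall z, f x <= f z] (ex_intro _ x1 mx)).
  by move=> /(_ x1) h; right; rewrite (ltW h01) h.
have [z] : exists z, ~ (f x1 <= f z) by apply/existsNP.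
move/negP; rewrite -ltNge => lz.
have [q] := rat_in_itvoo lz; rewrite in_itv /= => /andP[q1 q2].
apply: (fin (false, Some q)).
have : f (pt (false, Some q)) <= ratr q.
  exact: (@xgetPex M x0 [set x | f x <= ratr q] (ex_intro _ z (ltW q1))).
by move=> h; right; rewrite (ltW h01) (le_trans h (ltW q2)).
Qed.
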